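(* Let $\mathcal H$ be a semi-inner product space of holomorphic functions on $\mathbb D$ with semi-norm $\|\cdot\|$, such that $zf\in\mathcal H$ whenever $f\in\mathcal H$, and $\|zf\|\ge\|f\|$ for all $f\in\mathcal H$. Then for $\lambda\in\mathbb T$ and $0\le r<1$, $$\|(z-\lambda)f\|\le\frac{2}{1+r}\|(z-r\lambda)f\|,\quad f\in\mathcal H.$$
   Context: $\mathbb D$ is the open unit disc and $\mathbb T$ the unit circle. *)

(* Defs.v *)
From HB Require Import structures.
From mathcomp Require Import all_boot all_order all_algebra.
From mathcomp Require Import complex.
From mathcomp Require Import all_classical all_reals topology normedtype derive.
Set Implicit Arguments. Unset Strict Implicit. Unset Printing Implicit Defensive.
Import Order.TTheory GRing.Theory Num.Theory ComplexField.
Import numFieldNormedType.Exports.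
Local Open Scope ring_scope.
Local Open Scope classical_set_scope.

Section Defs.
Variable R : realType.
Local Notation C := (complex R).

Definition disc : set C := [set z | `|z| < 1].

(* f is holomorphic on D: complex differentiable at every point of D
   (derivable over the scalar field C itself, direction 1). Functions are
   represented as total maps C -> C; only their values on D matter for
   holomorphy. *)
Definition holomorphic_on_disc (f : C -> C) : Prop :=
  forall z, disc z -> derivable (f : C^o -> C^o) z 1.

Definition fun_subspace (H : set (C -> C)) : Prop :=
  [/\ H (fun _ => 0),
      (forall f g, H f -> H g -> H (fun z => f z + g z)) &
      (forall (a : C) f, H f -> H (fun z => a * f z))].

Definition semi_inner_product (H : set (C -> C)) (ip : (C -> C) -> (C -> C) -> C)
  : Prop :=
  [/\ (forall f g h, H f -> H g -> H h ->
         ip (fun z => f z + g z) h = ip f h + ip g h),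
      (forall (a : C) f g, H f -> H g -> ip (fun z => a * f z) g = a * ip f g),
      (forall f g, H f -> H g -> ip g f = (ip f g)^*) &
      (forall f, H f -> 0 <= ip f f)].

Definition sip_norm (ip : (C -> C) -> (C -> C) -> C) (f : C -> C) : C :=
  sqrtC (ip f f).

Definition mulz (f : C -> C) : C -> C := fun z => z * f z.

End Defs.

(* Main.v *)
Require Import Defs.
From HB Require Import structures.
From mathcomp Require Import all_boot all_order all_algebra.
From mathcomp Require Import complex.
From mathcomp Require Import all_classical all_reals topology normedtype derive.
From mathcomp Require Import ring.
Import Order.TTheory GRing.Theory Num.Theory ComplexField.
Import numFieldNormedType.Exports.
Local Open Scope ring_scope.
Local Open Scope classical_set_scope.
Local Open Scope complex_scope.

Section Aux.
Variable R : realType.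
Local Notation C := (complex R).
Variable H : set (C -> C).
Variable ip : (C -> C) -> (C -> C) -> C.
Hypothesis hsub : fun_subspace H.
Hypothesis hip : semi_inner_product H ip.

Lemma memH (u v : C -> C) (a b : C) : H u -> H v -> H (fun z => a * u z + b * v z).
Proof.
case: hsub => _ hadd hsc Hu Hv.
exact: (hadd _ _ (hsc a _ Hu) (hsc b _ Hv)).
Qed.

Lemma expand (u v : C -> C) (a b : C) : H u -> H v ->
  ip (fun z => a * u z + b * v z) (fun z => a * u z + b * v z) =
  a * a^*%R * ip u u + a * b^*%R * (ip v u)^*%R + b * a^*%R * ip v u + b * b^*%R * ip v v.
Proof.
move=> Hu Hv; case: hsub => _ hadd hsc; case: hip => ipD ipZ ipC ip0.
have Hau := hsc a _ Hu; have Hbv := hsc b _ Hv.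
have Hw := @memH u v a b Hu Hv.
have e1 := ipD (fun z => a * u z) (fun z => b * v z) _ Hau Hbv Hw.
rewrite /= in e1; rewrite e1 (ipZ a u _ Hu Hw) (ipZ b v _ Hv Hw).
have ipr : forall g (h : C -> C), H g -> H h -> ip g h = (ip h g)^*%R.
  by move=> g h Hg Hh; rewrite ipC.
rewrite (ipr u _ Hu Hw) (ipr v _ Hv Hw).
have e2 := ipD (fun z => a * u z) (fun z => b * v z) _ Hau Hbv Hu.
have e3 := ipD (fun z => a * u z) (fun z => b * v z) _ Hau Hbv Hv.
rewrite /= in e2 e3; rewrite e2 e3 (ipZ a u _ Hu Hu) (ipZ b v _ Hv Hu)
  (ipZ a u _ Hu Hv) (ipZ b v _ Hv Hv).
rewrite (ipC v u Hv Hu).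
have cr : forall x : C, 0 <= x -> x^*%R = x.
  by move=> x x0; apply/CrealP; apply: ger0_real.
rewrite !rmorphD !rmorphM /= !conjCK (cr _ (ip0 u Hu)) (cr _ (ip0 v Hv)).
ring.
Qed.

End Aux.

Theorem lemma2p5 (R : realType) (H : set (complex R -> complex R))
    (ip : (complex R -> complex R) -> (complex R -> complex R) -> complex R) :
  fun_subspace H ->
  (forall f, H f -> holomorphic_on_disc f) ->
  semi_inner_product H ip ->
  (forall f, H f -> H (mulz f)) ->
  (forall f, H f -> sip_norm ip f <= sip_norm ip (mulz f)) ->
  forall (lambda : complex R), `|lambda| = 1 ->
  forall (r : R), 0 <= r < 1 ->
  forall f, H f ->
    sip_norm ip (fun z => (z - lambda) * f z)
      <= (2 / (1 + r))%:C * sip_norm ip (fun z => (z - r%:C * lambda) * f z).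
Proof.
move=> hsub _ hip hmul hnorm lam hlam r /andP[r0 r1] f Hf.
have Hu := hmul f Hf.
set u := mulz f.
set k : complex R := r%:C.
have k0 : 0 <= k by rewrite /k -(rmorph0 (real_complex R)) lecR.
have k1 : k < 1 by rewrite /k -(rmorph1 (real_complex R)) ltcR.
case: (hip) => ipD ipZ ipC ip0.
have cr : forall x : complex R, 0 <= x -> x^*%R = x.
  by move=> x x0; apply/CrealP; apply: ger0_real.
have kJ := cr k k0.
have lJ : lam * lam^*%R = 1 by rewrite -normCK hlam expr1n.
have eP : (fun z => (z - lam) * f z) = (fun z => 1 * u z + (-lam) * f z).
  by apply/funext => z; rewrite /u /mulz; ring.
have eQ : (fun z => (z - k * lam) * f z) = (fun z => 1 * u z + (-(k * lam)) * f z).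
  by apply/funext => z; rewrite /u /mulz; ring.
have HS := @memH R H hsub u f 1 lam Hu Hf.
have S0 := ip0 _ HS.
have A0 := ip0 _ Hu.
have B0 := ip0 _ Hf.
have AB : ip f f <= ip u u.
  by rewrite -ler_sqrtC ?nnegrE //; exact: hnorm.
set P := ip (fun z => (z - lam) * f z) (fun z => (z - lam) * f z).
set Q := ip (fun z => (z - k * lam) * f z) (fun z => (z - k * lam) * f z).
have P0 : 0 <= P by rewrite /P eP; apply: ip0; apply: memH.
have Q0 : 0 <= Q by rewrite /Q eQ; apply: ip0; apply: memH.
have id : 4 * Q - (1 + k) ^+ 2 * P =
   (1 - k) * (1 - k) * ip (fun z => 1 * u z + lam * f z) (fun z => 1 * u z + lam * f z)
   + 2 * (1 - k) * (1 + k) * (ip u u - ip f f).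
  rewrite /P /Q eP eQ !(@expand R H ip hsub hip) //.
  rewrite !rmorphN !rmorphM /= kJ !rmorph1.
  rewrite [ip u u - _](_ : _ = ip u u - lam * lam^*%R * ip f f); last by rewrite lJ mul1r.
  ring.
have h1 : (1 + k) ^+ 2 * P <= 4 * Q.
  rewrite -subr_ge0 id.
  have hk1 : 0 <= 1 - k by rewrite subr_ge0; exact: ltW.
  have hk2 : 0 <= 1 + k by apply: addr_ge0.
  have hab : 0 <= ip u u - ip f f by rewrite subr_ge0.
  by apply: addr_ge0; apply: mulr_ge0 => //; apply: mulr_ge0 => //; apply: mulr_ge0.
rewrite /sip_norm -/P -/Q.
set p := sqrtC P; set q := sqrtC Q.
have p0 : 0 <= p by rewrite sqrtC_ge0.
have q0 : 0 <= q by rewrite sqrtC_ge0.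
have k1p : 0 < 1 + k by apply: ltr_wpDr.
have h2 : (1 + k) * p <= 2 * q.
  have nn1 : (1 + k) * p \is Num.nneg by rewrite nnegrE; apply: mulr_ge0 => //; exact: ltW.
  have nn2 : 2 * q \is Num.nneg by rewrite nnegrE mulr_ge0.
  rewrite -(ler_sqr nn1 nn2).
  have e4 : (2 : complex R) ^+ 2 = 4 by rewrite expr2; ring.
  rewrite !exprMn /p /q !sqrtCK e4; exact: h1.
have -> : (2 / (1 + r))%:C = 2 / (1 + k).
  by rewrite fmorph_div !rmorphD !rmorph1.
by rewrite mulrAC ler_pdivlMr // mulrC.
Qed.
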